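(* Let $x\in\mathbb{R}^n$. If $G_i^-(x)=G_i^+(x)$ for any $i\in I$, then $G_{\min}^+(x)=G_{\min}^-(x)$. If the equidistant sets belonging to the focal sets $K$ and $L_i$ are equidistant functions for any $i\in I$, then so is the equidistant set belonging to the focal sets $K$ and $L$.
   Context: For sets $A,B\subset\mathbb{R}^{n+1}$ and a point $p$, $d(p,A)=\inf\{|p-a| : a\in A\}$, and the equidistant set is $\{A=B\}=\{p : d(p,A)=d(p,B)\}$. Let $I$ be a finite, nonempty index set and $\{f_i\mid i\in I\}$ a family of positive-valued, continuous functions on $\mathbb{R}^n$, with epigraphs $L_i=\{(x,y)\mid f_i(x)\le y\}\subset\mathbb{R}^n\times\mathbb{R}$. Let $K\subset\mathbb{R}^{n+1}$ be a nonempty, closed set containing a point $(x_*,y_* )$ with $y_*\le 0$ (i.e. $K$ extends into the closed negative half-space), and with $K\cap L_i=\emptyset$ for all $i\in I$. Let $f_{\min}(x)=\min\{f_i(x)\mid i\in I\}$; its epigraph is $L=\bigcup_{i\in I}L_i$, and $K\cap L=\emptyset$. For focal sets $K$ and a (disjoint) epigraph $M$, the upper/lower equidistant functions are $G^+(x)=\sup\{y : d((x,y),K)=d((x,y),M)\}$ and $G^-(x)=\inf\{y : d((x,y),K)=d((x,y),M)\}$; when the equidistant point on each vertical line is unique, the equidistant set is the graph of the equidistant function $G$ defined by $d((x,G(x)),K)=d((x,G(x)),M)$. Here $G_i^\pm$ are the upper/lower equidistant functions for $K$ and $L_i$, and $G_{\min}^\pm$ those for $K$ and $L$. It has been shown that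 $\min_i G_i^-(x)\le G_{\min}^-(x)\le G_{\min}^+(x)\le\min_i G_i^+(x)$ for all $x$. *)

(* Defs.v *)
From HB Require Import structures.
From mathcomp Require Import all_boot all_order all_algebra.
From mathcomp Require Import all_classical all_reals all_analysis.
Set Implicit Arguments. Unset Strict Implicit. Unset Printing Implicit Defensive.
Import Order.TTheory GRing.Theory Num.Theory.
Import numFieldNormedType.Exports.
Local Open Scope classical_set_scope.
Local Open Scope ring_scope.

(* Points of R^{n+1} = R^n x R are pairs (x, y) with x : 'rV[R]_n, y : R. *)

Definition eucl_dist {R : realType} {n : nat} (p q : 'rV[R]_n * R) : R :=
  Num.sqrt (\sum_(j < n) (p.1 ord0 j - q.1 ord0 j) ^+ 2 + (p.2 - q.2) ^+ 2).

Definition dist_set {R : realType} {n : nat}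
    (p : 'rV[R]_n * R) (A : set ('rV[R]_n * R)) : R :=
  inf [set eucl_dist p a | a in A].

Definition equidistant_set {R : realType} {n : nat}
    (A B : set ('rV[R]_n * R)) : set ('rV[R]_n * R) :=
  [set p | dist_set p A = dist_set p B].

Definition epigraph {R : realType} {n : nat} (f : 'rV[R]_n -> R)
    : set ('rV[R]_n * R) :=
  [set p | f p.1 <= p.2].

Definition Gplus {R : realType} {n : nat} (K M : set ('rV[R]_n * R))
    (x : 'rV[R]_n) : \bar R :=
  ereal_sup [set y%:E | y in [set y | equidistant_set K M (x, y)]].

Definition Gminus {R : realType} {n : nat} (K M : set ('rV[R]_n * R))
    (x : 'rV[R]_n) : \bar R :=
  ereal_inf [set y%:E | y in [set y | equidistant_set K M (x, y)]].

Definition is_equidistant_function {R : realType} {n : nat}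
    (K M : set ('rV[R]_n * R)) : Prop :=
  forall x : 'rV[R]_n, exists! y : R, equidistant_set K M (x, y).

(* Main.v *)
Require Import Defs.
From HB Require Import structures.
From mathcomp Require Import all_boot all_order all_algebra.
From mathcomp Require Import all_classical all_reals all_analysis.
From mathcomp Require Import ring lra.
Import Order.TTheory GRing.Theory Num.Theory.
Import numFieldNormedType.Exports.
Local Open Scope classical_set_scope.
Local Open Scope ring_scope.

Section H.
Context {R : realType} {n : nat}.
Implicit Types (A : set ('rV[R]_n * R)).

Lemma lip_cont (g : R -> R) : (forall a b, `|g a - g b| <= `|a - b|) -> continuous g.
Proof.
move=> Lg y; apply/cvgrPdist_lt => e e0.
apply/nbhs_ballP; exists e => //= t; rewrite /ball /= => ht.
exact: le_lt_trans (Lg _ _) ht.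
Qed.

Lemma eucl_ge0 (p q : 'rV[R]_n * R) : 0 <= eucl_dist p q.
Proof. exact: sqrtr_ge0. Qed.

Lemma dist_ge0 p A : 0 <= dist_set p A.
Proof.
rewrite /dist_set; case: (pselect (A !=set0)) => [[a Aa]|A0].
  apply: lb_le_inf; first by exists (eucl_dist p a), a.
  by move=> _ [b _ <-]; exact: eucl_ge0.
have -> : [set eucl_dist p a | a in A] = set0.
  by apply/seteqP; split => // z [b Ab _]; apply: A0; exists b.
by rewrite inf0.
Qed.

Lemma dist_le p A a : A a -> dist_set p A <= eucl_dist p a.
Proof.
move=> Aa; apply: ge_inf; last by exists a.
by exists 0 => _ [b _ <-]; exact: eucl_ge0.
Qed.

Lemma dist_ge p A m : A !=set0 -> (forall a, A a -> m <= eucl_dist p a) -> m <= dist_set p A.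
Proof.
move=> [a Aa] H; apply: lb_le_inf; first by exists (eucl_dist p a), a.
by move=> _ [b Ab <-]; exact: H.
Qed.

Lemma dist_self p A : A p -> dist_set p A = 0.
Proof.
move=> Ap; apply/le_anti; rewrite dist_ge0 andbT.
apply: le_trans (@dist_le p A p Ap) _.
by rewrite /eucl_dist big1 ?add0r ?subrr ?expr0n ?sqrtr0// => j _; rewrite subrr expr0n.
Qed.

Lemma tri_aux (S s t h : R) : 0 <= S -> 0 <= s -> s ^+ 2 = S + t ^+ 2 ->
  S + (t - h) ^+ 2 <= (s + `|h|) ^+ 2.
Proof.
move=> S0 s0 ss.
have tt : t ^+ 2 <= s ^+ 2 by rewrite ss lerDr.
have nt : `|t| <= s.
  have := ler_wsqrtr tt; rewrite !sqrtr_sqr (ger0_norm s0); exact.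
have ht : t <= s /\ - t <= s.
  split; apply: le_trans nt; [exact: ler_norm | rewrite -normrN; exact: ler_norm].
case: ht => h1 h2.
case: (lerP 0 h) => hh.
  rewrite ger0_norm //; nra.
rewrite ltr0_norm //; nra.
Qed.

Lemma eucl_vert (x : 'rV[R]_n) (y y' : R) (a : 'rV[R]_n * R) :
  eucl_dist (x, y') a <= eucl_dist (x, y) a + `|y - y'|.
Proof.
rewrite /eucl_dist /=.
have S0 : 0 <= \sum_(j < n) (x ord0 j - a.1 ord0 j) ^+ 2.
  by apply: sumr_ge0 => j _; exact: sqr_ge0.
have s0 := sqrtr_ge0 (\sum_(j < n) (x ord0 j - a.1 ord0 j) ^+ 2 + (y - a.2) ^+ 2).
have ss := sqr_sqrtr (addr_ge0 S0 (sqr_ge0 (y - a.2))).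
have hp := addr_ge0 s0 (normr_ge0 (y - y')).
rewrite -[leRHS]ger0_norm // -sqrtr_sqr ler_wsqrtr //.
have -> : y' - a.2 = (y - a.2) - (y - y') by ring.
exact: tri_aux.
Qed.

Lemma dist_vert (x : 'rV[R]_n) (y y' : R) A : A !=set0 ->
  dist_set (x, y') A <= dist_set (x, y) A + `|y - y'|.
Proof.
move=> A0; rewrite -lerBlDr; apply: dist_ge => // a Aa.
rewrite lerBlDr; apply: le_trans (eucl_vert _ _ _ _); exact: dist_le.
Qed.

Lemma dist_cont (x : 'rV[R]_n) A : A !=set0 -> continuous (fun y => dist_set (x, y) A).
Proof.
move=> A0; apply: lip_cont => a b; rewrite ler_norml.
have h1 := @dist_vert x a b A A0; have h2 := @dist_vert x b a A A0.
rewrite distrC in h2; apply/andP; split; lra.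
Qed.


Lemma f_lb (f : 'rV[R]_n -> R) (x : 'rV[R]_n) (r : R) :
  continuous f -> (forall z, 0 < f z) -> 0 <= r ->
  exists2 m : R, 0 < m & forall z : 'rV[R]_n, (forall j, `|x ord0 j - z ord0 j| <= r) -> m <= f z.
Proof.
move=> fc fp r0.
pose A := [set v : 'rV[R]_n | forall j,
   (fun j => `[x ord0 j - r, x ord0 j + r]%classic) j (v ord0 j)].
have cA : compact A by apply: rV_compact => j; exact: segment_compact.
have A0 : A !=set0.
  exists x => j /=; rewrite in_itv /=; apply/andP; split; lra.
have [c _ Hc] := EVT_min_rV A0 cA (continuous_subspaceT (A := A) fc).
exists (f c) => // z Hz; apply: Hc; rewrite inE => j /=.
have := Hz j; rewrite in_itv /= ler_norml => /andP[h1 h2]; apply/andP; split; lra.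
Qed.

Lemma sum_term (F : 'I_n -> R) j : (forall k, 0 <= F k) -> F j <= \sum_(k < n) F k.
Proof.
move=> F0; rewrite (bigD1 j) //= lerDl; apply: sumr_ge0 => k _; exact: F0.
Qed.

Lemma below (f : 'rV[R]_n -> R) (K : set ('rV[R]_n * R)) (x : 'rV[R]_n) :
  continuous f -> (forall z, 0 < f z) -> (exists p, K p /\ p.2 <= 0) ->
  forall B, exists Y, Y < B /\ dist_set (x, Y) K <= dist_set (x, Y) (epigraph f).
Proof.
move=> fc fp [[xs ys] [Kp /= ys0]] B.
pose D := \sum_(j < n) (x ord0 j - xs ord0 j) ^+ 2.
have D0 : 0 <= D by apply: sumr_ge0 => j _; exact: sqr_ge0.
have [m m0 Hm] := @f_lb f x _ fc fp (sqrtr_ge0 D).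
have Dm0 : 0 <= D / (2 * m) by apply: divr_ge0 => //; lra.
have e : D / (2 * m) * (2 * m) = D by field; lra.
move: (D / (2 * m)) Dm0 e => q q0 e.
have nB : - `|B| <= B by rewrite lerNl -normrN ler_norm.
have ny0 := normr_ge0 ys.
have nys : - `|ys| <= ys by rewrite lerNl -normrN ler_norm.
have nb0 := normr_ge0 B.
move: (`|B|) (`|ys|) nB ny0 nys nb0 => nb nys' nB ny0 nys nb0.
pose Y : R := - (nb + nys' + q + 1).
exists Y; split; first by rewrite /Y; lra.
apply: le_trans (@dist_le (x, Y) K _ Kp) _.
apply: dist_ge; first by exists (x, f x); rewrite /epigraph /=.
move=> [a1 a2] /= Ha; rewrite /epigraph /= in Ha.
rewrite /eucl_dist /=; apply: ler_wsqrtr.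
rewrite -/D.
set H := \sum_(j < n) _.
have H0 : 0 <= H by apply: sumr_ge0 => j _; exact: sqr_ge0.
have Yys : Y <= ys by rewrite /Y; lra.
have Yneg : Y < 0 by rewrite /Y; lra.
have mY : q <= - Y by rewrite /Y; lra.
have fa := fp a1.
have h1 : (Y - ys) ^+ 2 <= Y ^+ 2 by nra.
have h2 : Y ^+ 2 + 2 * (- Y) * f a1 <= (Y - a2) ^+ 2 by nra.
have key : D <= H + 2 * (- Y) * f a1.
  case: (lerP D H) => hDH; first by nra.
  have mf : m <= f a1.
    apply: Hm => j.
    have hj : (x ord0 j - a1 ord0 j) ^+ 2 <= D.
      apply: le_trans (ltW hDH).
      by apply: (sum_term (fun k => (x ord0 k - a1 ord0 k) ^+ 2)) => k; exact: sqr_ge0.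
    by have := ler_wsqrtr hj; rewrite sqrtr_sqr.
  nra.
lra.
Qed.

Lemma sign_below (dK eK : R -> R) (g : R) :
  continuous (fun y => dK y - eK y) ->
  (forall y, dK y = eK y <-> y = g) ->
  (forall B, exists Y, Y < B /\ dK Y <= eK Y) ->
  forall y, y < g -> dK y < eK y.
Proof.
move=> phic Hg Hb y yg; rewrite ltNge; apply/negP => hy.
have [Y [Yy hY]] := Hb y.
have := @IVT R (fun y => dK y - eK y) Y y 0 (ltW Yy) (continuous_subspaceT phic).
case.
  by rewrite ge_min le_max; apply/andP; split; apply/orP; [left|right]; lra.
move=> c; rewrite in_itv /= => /andP[_ cy] /eqP; rewrite subr_eq0 => /eqP /Hg cg.
lra.
Qed.

Lemma sign_above (dK eK : R -> R) (g : R) :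
  continuous (fun y => dK y - eK y) ->
  (forall y, dK y = eK y <-> y = g) ->
  (forall B, exists Y, B < Y /\ eK Y <= dK Y) ->
  forall y, g < y -> eK y < dK y.
Proof.
move=> phic Hg Hb y yg; rewrite ltNge; apply/negP => hy.
have [Y [Yy hY]] := Hb y.
have := @IVT R (fun y => dK y - eK y) y Y 0 (ltW Yy) (continuous_subspaceT phic).
case.
  by rewrite ge_min le_max; apply/andP; split; apply/orP; [left|right]; lra.
move=> c; rewrite in_itv /= => /andP[yc _] /eqP; rewrite subr_eq0 => /eqP /Hg cg.
lra.
Qed.

Lemma core (I : finType) (i0 : I) (dK : R -> R) (e : I -> R -> R) (E : R -> R) :
  (forall i, continuous (fun y => dK y - e i y)) ->
  (forall i, exists g, forall y, dK y = e i y <-> y = g) ->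
  (forall i B, exists Y, Y < B /\ dK Y <= e i Y) ->
  (forall i B, exists Y, B < Y /\ e i Y <= dK Y) ->
  (forall y i, E y <= e i y) ->
  (forall y, exists j, e j y <= E y) ->
  exists g0, forall y, dK y = E y <-> y = g0.
Proof.
move=> phic /choice[g Hg] Hb Ha HE1 HE2.
have sb i := @sign_below dK (e i) (g i) (phic i) (Hg i) (Hb i).
have sa i := @sign_above dK (e i) (g i) (phic i) (Hg i) (Ha i).
case: (@arg_minP _ R I i0 predT g isT) => j0 _ Hj0.
exists (g j0) => y; split.
  move=> hy; case: (ltgtP y (g j0)) => // hyg.
    have [j hj] := HE2 y.
    have := sb j y (lt_le_trans hyg (Hj0 j isT)); lra.
  have := sa j0 y hyg; have := HE1 y j0; lra.
move=> ->; apply/le_anti/andP; split.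
  have [j hj] := HE2 (g j0).
  have := Hj0 j isT; case: (ltgtP (g j0) (g j)) => gj hle.
  - have := sb j _ gj; lra.
  - lra.
  - have : dK (g j0) = e j (g j0) by apply/Hg.
    lra.
have : dK (g j0) = e j0 (g j0) by apply/Hg.
have := HE1 (g j0) j0; lra.
Qed.

Lemma single_of_eq (S : set R) :
  ereal_inf [set y%:E | y in S] = ereal_sup [set y%:E | y in S] ->
  exists g, forall y, S y <-> y = g.
Proof.
move=> h; case: (pselect (S !=set0)) => [[s Ss]|S0]; last first.
  have E0 : [set y%:E | y in S] = set0.
    by apply/seteqP; split => // z [b Sb _]; apply: S0; exists b.
  by move: h; rewrite E0 ereal_inf0 ereal_sup0.
exists s => y; split; last by move=> ->.
move=> Sy.
have i1 : (ereal_inf [set y%:E | y in S] <= y%:E)%E by apply: ereal_inf_lbound; exists y.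
have i2 : (ereal_inf [set y%:E | y in S] <= s%:E)%E by apply: ereal_inf_lbound; exists s.
have s1 : (y%:E <= ereal_sup [set y%:E | y in S])%E by apply: ereal_sup_ubound; exists y.
have s2 : (s%:E <= ereal_sup [set y%:E | y in S])%E by apply: ereal_sup_ubound; exists s.
rewrite -h in s1 s2.
have : y%:E = s%:E by apply/le_anti; rewrite (le_trans s1 i2) (le_trans s2 i1).
by case.
Qed.

Lemma G_of_single (S : set R) g : (forall y, S y <-> y = g) ->
  ereal_sup [set y%:E | y in S] = g%:E /\ ereal_inf [set y%:E | y in S] = g%:E.
Proof.
move=> H.
have -> : [set y%:E | y in S] = [set g%:E].
  apply/seteqP; split => z.
    by case=> y /H -> <-.
  by move=> ->; exists g => //; apply/H.
by rewrite ereal_sup1 ereal_inf1.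
Qed.
End H.

Theorem corollary7 (R : realType) (n : nat) (I : finType)
    (f : I -> 'rV[R]_n -> R) (K : set ('rV[R]_n * R)) :
  (0 < #|I|)%N ->
  (forall i x, 0 < f i x) ->
  (forall i, continuous (f i)) ->
  closed K ->
  (exists p, K p /\ p.2 <= 0) ->
  (forall i, K `&` epigraph (f i) = set0) ->
  let L := \bigcup_(i in [set: I]) epigraph (f i) in
  (forall x : 'rV[R]_n,
     (forall i, Gminus K (epigraph (f i)) x = Gplus K (epigraph (f i)) x) ->
     Gplus K L x = Gminus K L x) /\
  ((forall i, is_equidistant_function K (epigraph (f i))) ->
   is_equidistant_function K L).
Proof.
move=> HI fpos fc _ Kp _ L.
have [i0 _] : exists i0 : I, i0 \in I by apply/card_gt0P.
have K0 : K !=set0 by case: Kp => p [Kp _]; exists p.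
have epi0 i x : epigraph (f i) (x, f i x) by rewrite /epigraph /=.
have key : forall x : 'rV[R]_n,
    (forall i, exists g, forall y, equidistant_set K (epigraph (f i)) (x, y) <-> y = g) ->
    exists g0, forall y, equidistant_set K L (x, y) <-> y = g0.
  move=> x H.
  apply: (@core R I i0 (fun y => dist_set (x, y) K)
            (fun i y => dist_set (x, y) (epigraph (f i))) (fun y => dist_set (x, y) L)).
  - move=> i y.
    have c1 := @dist_cont R n x K K0.
    have c2 := @dist_cont R n x _ (ex_intro _ (x, f i x) (epi0 i x)).
    exact: (continuousB (c1 y) (c2 y)).
  - exact: H.
  - by move=> i B; apply: below.
  - move=> i B; exists (Num.max B (f i x) + 1); split.
      by rewrite ltr_pwDr // le_max lexx.
    rewrite dist_self ?dist_ge0 // /epigraph /=.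
    by apply: le_trans (ltW (ltr_pwDr _ _)) => //; rewrite le_max lexx orbT.
  - move=> y i; apply: dist_ge; first by exists (x, f i x).
    by move=> a Ha; apply: dist_le; exists i.
  - move=> y.
    case: (@arg_minP _ R I i0 predT (fun i => dist_set (x, y) (epigraph (f i))) isT)
      => j _ Hj.
    exists j; apply: dist_ge; first by exists (x, f i0 x), i0.
    move=> a [k _ Hk]; apply: le_trans (Hj k isT) _; exact: dist_le.
split.
  move=> x H.
  have [g0 Hg0] := key x (fun i => @single_of_eq R _ (H i)).
  have [h1 h2] := @G_of_single R [set y | equidistant_set K L (x, y)] g0 Hg0.
  by rewrite /Gplus /Gminus h1 h2.
move=> H x.
have [g0 Hg0] : exists g0, forall y, equidistant_set K L (x, y) <-> y = g0.
  apply: key => i; have [g [Pg U]] := H i x.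
  by exists g => y; split; [move/U => <- | move=> ->].
by exists g0; split; [apply/Hg0 | move=> y /Hg0 ->].
Qed.
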